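(* Let $G$ be a non-supergraceful graph having a semitotal labeling $\varphi$ with $1 \in N(\varphi)$. Then there is a connected supergraceful graph $H$ containing an induced subgraph isomorphic to $G$.
   Context: Graphs are finite, simple. For a labeling $\varphi: V(G) \to \mathbb{Z}_{>0}$ let $N(\varphi) = \{\varphi(x) : x \in V(G)\}$ and $E(\varphi) = \{|\varphi(x)-\varphi(y)| : xy \in E(G)\}$. A total labeling of a graph with $p$ nodes and $q$ edges is a map $\varphi$ such that the $p$ node labels and $q$ edge labels are pairwise distinct and $N(\varphi) \cup E(\varphi) = \{1,\dots,p+q\}$; a graph is supergraceful if it has one, non-supergraceful otherwise. For non-supergraceful $G$, let $q_0>0$ be the least integer such that there is a labeling with all node and edge labels pairwise distinct and $N(\varphi)\cup E(\varphi) \subseteq \{1,\dots,p+q+q_0\}$; such a labeling is a semitotal labeling. *)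

(* Defs.v *)
From mathcomp Require Import all_boot.
Set Implicit Arguments. Unset Strict Implicit. Unset Printing Implicit Defensive.

Definition simple_graph (V : finType) (e : rel V) : Prop :=
  symmetric e /\ irreflexive e.

Definition absdiff (a b : nat) : nat := maxn a b - minn a b.

Definition edges (V : finType) (e : rel V) : {set {set V}} :=
  [set [set x; y] | x in V, y in V & e x y].

Definition nnodes (V : finType) (e : rel V) : nat := #|V|.
Definition nedges (V : finType) (e : rel V) : nat := #|edges e|.

Definition in_N (V : finType) (phi : V -> nat) (k : nat) : Prop :=
  exists x, phi x = k.
Definition in_E (V : finType) (e : rel V) (phi : V -> nat) (k : nat) : Prop :=
  exists x y, e x y /\ absdiff (phi x) (phi y) = k.

Definition distinct_labeling (V : finType) (e : rel V) (phi : V -> nat) : Prop :=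
  (forall x, 0 < phi x) /\
  injective phi /\
  (forall x y u v, e x y -> e u v ->
     absdiff (phi x) (phi y) = absdiff (phi u) (phi v) ->
     [set x; y] = [set u; v]) /\
  (forall z x y, e x y -> phi z <> absdiff (phi x) (phi y)).

Definition total_labeling (V : finType) (e : rel V) (phi : V -> nat) : Prop :=
  distinct_labeling e phi /\
  (forall k, (1 <= k <= nnodes e + nedges e) <-> (in_N phi k \/ in_E e phi k)).

Definition supergraceful (V : finType) (e : rel V) : Prop :=
  exists phi, total_labeling e phi.

Definition bounded_labeling (V : finType) (e : rel V) (phi : V -> nat) (m : nat)
  : Prop :=
  distinct_labeling e phi /\
  (forall k, in_N phi k \/ in_E e phi k -> 1 <= k <= m).

Definition is_q0 (V : finType) (e : rel V) (q0 : nat) : Prop :=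
  0 < q0 /\
  (exists phi, bounded_labeling e phi (nnodes e + nedges e + q0)) /\
  (forall q', 0 < q' ->
     (exists psi, bounded_labeling e psi (nnodes e + nedges e + q')) ->
     q0 <= q').

Definition semitotal_labeling (V : finType) (e : rel V) (phi : V -> nat) : Prop :=
  exists q0, is_q0 e q0 /\ bounded_labeling e phi (nnodes e + nedges e + q0).

Definition connected_graph (V : finType) (e : rel V) : Prop :=
  forall x y : V, connect e x y.

Definition has_induced_copy (V W : finType) (e : rel V) (f : rel W) : Prop :=
  exists h : V -> W, injective h /\ forall x y, f (h x) (h y) = e x y.

(* Main.v *)
Require Import Defs.
From mathcomp Require Import all_boot zify.
Set Implicit Arguments. Unset Strict Implicit. Unset Printing Implicit Defensive.

Lemma set2_eq (T : finType) (a b c d : T) :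
  [set a; b] = [set c; d] -> (a = c /\ b = d) \/ (a = d /\ b = c).
Proof.
move=> E.
have ha : a \in [set c; d] by rewrite -E !inE eqxx.
have hb : b \in [set c; d] by rewrite -E !inE eqxx orbT.
have hc : c \in [set a; b] by rewrite E !inE eqxx.
have hd : d \in [set a; b] by rewrite E !inE eqxx orbT.
move: ha hb hc hd; rewrite !inE => /orP[]/eqP ha /orP[]/eqP hb /orP[]/eqP hc /orP[]/eqP hd;
 subst; auto.
Qed.

Lemma edgesP (W : finType) (f : rel W) S :
  reflect (exists x y, f x y /\ S = [set x; y]) (S \in edges f).
Proof.
rewrite /edges. apply: (iffP imset2P).
  by case=> x y _; rewrite inE => fxy ->; exists x, y.
case=> x [y [fxy ->]]; exists x y => //; by rewrite inE.
Qed.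

Definition dlab (W : finType) (Φ : W -> nat) (S : {set W}) : nat :=
  (\max_(z in S) Φ z).*2 - \sum_(z in S) Φ z.

Lemma dlab2 (W : finType) (Φ : W -> nat) x y : x != y ->
  dlab Φ [set x; y] = absdiff (Φ x) (Φ y).
Proof.
move=> nxy; rewrite /dlab /absdiff big_setU1 /= ?big_set1 ?inE //.
rewrite big_setU1 /= ?big_set1 ?inE //. lia.
Qed.

Lemma count_total (W : finType) (f : rel W) (Φ : W -> nat) n :
  distinct_labeling f Φ ->
  (forall k, (1 <= k <= n) <-> (in_N Φ k \/ in_E f Φ k)) ->
  nnodes f + nedges f = n.
Proof.
move=> [Hpos [Hinj [Hedg Hne]]] Hiff.
have labN x : 1 <= Φ x <= n by apply/Hiff; left; exists x.
have labE x y : f x y -> 1 <= absdiff (Φ x) (Φ y) <= n.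
  by move=> fxy; apply/Hiff; right; exists x, y.
have fneq x y : f x y -> x != y.
  move=> fxy; apply/eqP=> exy; subst; move: (labE _ _ fxy).
  by rewrite /absdiff subnn.
pose NL := [set k : 'I_n.+1 | [exists x, Φ x == k]].
pose EL := [set k : 'I_n.+1 | [exists x, [exists y, f x y && (absdiff (Φ x) (Φ y) == k)]]].
have cover : [set~ (ord0 : 'I_n.+1)] = NL :|: EL.
  apply/setP=> k; rewrite !inE; apply/idP/idP.
    move=> nk0.
    have : 1 <= k <= n by move: nk0 (ltn_ord k); rewrite -val_eqE /=; lia.
    move/Hiff=> [[x hx]|[x [y [fxy hxy]]]]; apply/orP; [left|right].
      by apply/existsP; exists x; rewrite hx.
    by apply/existsP; exists x; apply/existsP; exists y; rewrite fxy hxy eqxx.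
  case/orP=> [/existsP[x /eqP hx]|/existsP[x /existsP[y /andP[fxy /eqP hxy]]]];
    rewrite -val_eqE /=.
    by move: (labN x); rewrite hx; lia.
  by move: (labE _ _ fxy); rewrite hxy; lia.
have disj : NL :&: EL = set0.
  apply/setP=> k; rewrite !inE.
  apply/negP=> /andP[/existsP[z /eqP hz] /existsP[x /existsP[y /andP[fxy /eqP hxy]]]].
  by apply: (Hne z x y fxy); rewrite hz hxy.
have cN : #|NL| = #|W|.
  have -> : NL = [set (inord (Φ x) : 'I_n.+1) | x in W].
    apply/setP=> k; rewrite !inE; apply/existsP/imsetP.
      case=> x /eqP hx; exists x => //; apply/val_inj; rewrite /= inordK hx //.
    case=> x _ ->; exists x; rewrite inordK //; move: (labN x); lia.
  rewrite card_imset //.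
  move=> x y /(congr1 val); rewrite /= !inordK; first by apply: Hinj.
    by move: (labN y); lia.
  by move: (labN x); lia.
have cE : #|EL| = #|edges f|.
  have -> : EL = [set (inord (dlab Φ S) : 'I_n.+1) | S in edges f].
    apply/setP=> k; rewrite !inE; apply/existsP/imsetP.
      case=> x /existsP[y /andP[fxy /eqP hxy]]; exists [set x; y].
        by apply/edgesP; exists x, y.
      by apply/val_inj; rewrite /= dlab2 ?fneq // inordK // hxy.
    case=> S /edgesP[x [y [fxy ->]]] ->; exists x; apply/existsP; exists y.
    rewrite fxy /= dlab2 ?fneq // inordK //; move: (labE _ _ fxy); lia.
  rewrite card_in_imset //.
  move=> S1 S2 /edgesP[x [y [fxy ->]]] /edgesP[u [v [fuv ->]]] /(congr1 val).
  rewrite /= !dlab2 ?fneq // !inordK; first by apply: Hedg.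
    by move: (labE _ _ fuv); lia.
  by move: (labE _ _ fxy); lia.
have := cardsC1 (ord0 : 'I_n.+1); rewrite cover cardsU disj cards0 subn0 cN cE card_ord /=.
by rewrite /nnodes /nedges => ->.
Qed.

Section Cons.
Variables (V : finType) (e : rel V) (phi : V -> nat).
Hypothesis Hsg : simple_graph e.
Hypothesis Hd : distinct_labeling e phi.
Variable x0 : V.

Definition K := \max_(x : V) phi x.
Definition isN (k : nat) := [exists x, phi x == k].
Definition isE (k : nat) := [exists x, [exists y, e x y && (absdiff (phi x) (phi y) == k)]].
Definition P := {j : 'I_K | ~~ isN j.+1}.
Definition U := (V + P)%type.
Definition W := (U + bool)%type.
Definition ell (a : U) : nat := match a with inl x => phi x | inr p => (val p).+1 end.
Definition Phi (w : W) : nat :=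
  match w with inl a => K.*2.+2 + ell a | inr true => K.*2.+2 | inr false => K.+1 end.
Definition frel (u v : W) : bool :=
  match u, v with
  | inl (inl x), inl (inl y) => e x y
  | inl _, inl _ => false
  | inl a, inr true => ~~ isE (ell a)
  | inr true, inl a => ~~ isE (ell a)
  | inl _, inr false => true
  | inr false, inl _ => true
  | inr _, inr _ => false
  end.

Lemma phi_le x : phi x <= K.
Proof. exact: leq_bigmax. Qed.

Lemma phi_pos x : 0 < phi x.
Proof. by case: Hd. Qed.

Lemma phi_inj : injective phi.
Proof. by case: Hd => _ []. Qed.

Lemma ell_bnd a : 1 <= ell a <= K.
Proof.
case: a => [x|[j hj]] /=; first by rewrite phi_pos phi_le.
by rewrite ltn_ord.
Qed.

Lemma ell_inj : injective ell.
Proof.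
case=> [x|[j hj]] [y|[k hk]] //=.
- by move/phi_inj => ->.
- by move=> E; exfalso; move: hk; rewrite /isN -E; case/existsP; exists x.
- by move=> E; exfalso; move: hj; rewrite /isN E; case/existsP; exists y.
- move=> [] /val_inj E; subst; congr inr; exact: val_inj.
Qed.

Lemma ell_surj k : 1 <= k <= K -> exists a, ell a = k.
Proof.
move=> hk; case hN: (isN k).
  by case/existsP: hN => x /eqP hx; exists (inl x).
have hk' : k.-1 < K by lia.
have hp : ~~ isN (Ordinal hk').+1 by rewrite /= prednK ?hN //; lia.
by exists (inr (exist _ (Ordinal hk') hp)) => /=; lia.
Qed.

Lemma edge_bnd x y : e x y -> 1 <= absdiff (phi x) (phi y) <= K.
Proof.
move=> exy; have nxy : x != y.
  by apply/eqP=> E; subst; case: Hsg => _ /(_ y); rewrite exy.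
have : phi x != phi y by apply/eqP=> /phi_inj E; rewrite E eqxx in nxy.
move: (phi_le x) (phi_le y); rewrite /absdiff; lia.
Qed.

Lemma notE_phi x : ~~ isE (phi x).
Proof.
apply/negP=> /existsP[u /existsP[v /andP[euv /eqP h]]].
by case: Hd => _ [_ [_ H]]; apply: (H x u v euv); rewrite h.
Qed.

Lemma frel_cases u v : frel u v ->
  (exists x y, u = inl (inl x) /\ v = inl (inl y) /\ e x y) \/
  (exists a, [set u; v] = [set inl a; inr true] /\ ~~ isE (ell a) /\
             absdiff (Phi u) (Phi v) = ell a) \/
  (exists a, [set u; v] = [set inl a; inr false] /\
             absdiff (Phi u) (Phi v) = K.+1 + ell a).
Proof.
case: u => [[x|p]|[]]; case: v => [[y|q]|[]] //=.
- by move=> h; left; exists x, y.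
all: move=> h; right; first [left; eexists; split; [first [reflexivity|apply: setUC]|split;[exact h| rewrite /absdiff /=; lia]] | right; eexists; split; [first [reflexivity|apply: setUC]| rewrite /absdiff /=; lia]].
Qed.
Lemma Phi_inj : injective Phi.
Proof.
case=> [a|[]] [b|[]] //=; try (move=> h; congr inl; apply: ell_inj; lia);
  try (have := ell_bnd a; lia); try (have := ell_bnd b; lia).
all: lia.
Qed.

Lemma absG x y : absdiff (Phi (inl (inl x))) (Phi (inl (inl y))) = absdiff (phi x) (phi y).
Proof. rewrite /absdiff /=; lia. Qed.

Lemma edge_eq x y u v : frel x y -> frel u v ->
  absdiff (Phi x) (Phi y) = absdiff (Phi u) (Phi v) -> [set x; y] = [set u; v].
Proof.
move=> /frel_cases [[x1 [y1 [-> [-> exy]]]]|[[a [Ea [na la]]]|[a [Ea la]]]];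
move=> /frel_cases [[u1 [v1 [-> [-> euv]]]]|[[b [Eb [nb lb]]]|[b [Eb lb]]]];
rewrite ?absG ?Ea ?Eb ?la ?lb => h.
- case: Hd => _ [_ [H _]]; case/set2_eq: (H _ _ _ _ exy euv h) => [[-> ->]|[-> ->]] //.
  exact: setUC.
- have: isE (absdiff (phi x1) (phi y1)) by apply/existsP; exists x1; apply/existsP; exists y1; rewrite exy eqxx.
  by rewrite h (negbTE nb).
- by exfalso; move: (edge_bnd exy) (ell_bnd b); lia.
- have: isE (absdiff (phi u1) (phi v1)) by apply/existsP; exists u1; apply/existsP; exists v1; rewrite euv eqxx.
  by rewrite -h (negbTE na).
- by rewrite (ell_inj h).
- by exfalso; move: (ell_bnd a) (ell_bnd b); lia.
- by exfalso; move: (edge_bnd euv) (ell_bnd a); lia.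
- by exfalso; move: (ell_bnd a) (ell_bnd b); lia.
- by rewrite (ell_inj (addnI h)).
Qed.

Lemma edge_lab x y : frel x y ->
  (1 <= absdiff (Phi x) (Phi y) <= K) \/ (K.+2 <= absdiff (Phi x) (Phi y) <= K.*2.+1).
Proof.
move=> /frel_cases [[x1 [y1 [-> [-> exy]]]]|[[a [Ea [na la]]]|[a [Ea la]]]].
- by left; rewrite absG; apply: edge_bnd.
- by left; rewrite la; apply: ell_bnd.
- by right; rewrite la; move: (ell_bnd a); lia.
Qed.

Lemma Phi_dist : distinct_labeling frel Phi.
Proof.
split; first by case=> [a|[]] /=; lia.
split; first exact: Phi_inj.
split; first exact: edge_eq.
move=> z x y /edge_lab h; case: z => [a|[]] /=; have := ell_bnd; move: h; try (move: (ell_bnd a)); lia.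
Qed.
Lemma frel_c a : frel (inl a) (inr true) = ~~ isE (ell a).
Proof. by case: a. Qed.
Lemma frel_w a : frel (inl a) (inr false) = true.
Proof. by case: a. Qed.

Definition NN := K.*2.+2 + K.

Lemma Phi_cover k : (1 <= k <= NN) <-> (in_N Phi k \/ in_E frel Phi k).
Proof.
rewrite /NN; split.
  move=> hk; case: (leqP k K) => h1.
    case hE: (isE k).
      case/existsP: hE => x /existsP[y /andP[exy /eqP hxy]]; right.
      by exists (inl (inl x)), (inl (inl y)); split=>//; rewrite absG.
    have [a ha] : exists a, ell a = k by apply: ell_surj; lia.
    right; exists (inl a), (inr true); split; first by rewrite frel_c ha hE.
    by rewrite /absdiff /= ha; lia.
  case: (leqP k K.+1) => h2.
    by left; exists (inr false) => /=; lia.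
  case: (leqP k K.*2.+1) => h3.
    have [a ha] : exists a, ell a = k - K.+1 by apply: ell_surj; lia.
    right; exists (inl a), (inr false); split; first by rewrite frel_w.
    by rewrite /absdiff /= ha; lia.
  case: (leqP k K.*2.+2) => h4.
    by left; exists (inr true) => /=; lia.
  have [a ha] : exists a, ell a = k - K.*2.+2 by apply: ell_surj; lia.
  by left; exists (inl a) => /=; rewrite ha; lia.
case=> [[z <-]|[x [y [fxy <-]]]].
  by case: z => [a|[]] /=; try (have := ell_bnd a); lia.
by case: (edge_lab fxy); lia.
Qed.

Lemma frel_sym : symmetric frel.
Proof.
case: Hsg => se _.
by case=> [[x|p]|[]] [[y|q]|[]] //=; rewrite se.
Qed.

Lemma frel_irr : irreflexive frel.
Proof.
case: Hsg => _ ie.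
by case=> [[x|p]|[]] //=; rewrite ie.
Qed.

Lemma to_w u : connect frel u (inr false).
Proof.
case: u => [a|[]].
- by apply: connect1; rewrite frel_w.
- apply: (connect_trans (y := inl (inl x0))); apply: connect1 => //=.
  exact: notE_phi.
- exact: connect0.
Qed.

Lemma frel_conn : connected_graph frel.
Proof.
move=> u v; apply: (connect_trans (to_w u)).
by rewrite (sym_connect_sym frel_sym); apply: to_w.
Qed.

Lemma frel_induced : has_induced_copy e frel.
Proof.
exists (fun x => inl (inl x)); split=> //.
by move=> x y [].
Qed.

Lemma frel_super : supergraceful frel.
Proof.
exists Phi; split; first exact: Phi_dist.
move=> k; rewrite (count_total Phi_dist Phi_cover); exact: Phi_cover.
Qed.

End Cons.

Theorem theorem8p8 (V : finType) (e : rel V) :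
  simple_graph e ->
  ~ supergraceful e ->
  forall phi : V -> nat, semitotal_labeling e phi -> in_N phi 1 ->
  exists (W : finType) (f : rel W),
    simple_graph f /\ connected_graph f /\ supergraceful f /\
    has_induced_copy e f.
Proof.
move=> Hsg _ phi [q0 [_ [Hd _]]] [x0 _].
eexists; exists (@frel V e phi); split; first by split; [exact: frel_sym | exact: frel_irr].
split; first exact: (frel_conn Hsg Hd x0).
split; first exact: (frel_super Hsg Hd).
exact: frel_induced.
Qed.
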